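(* Let $m\ge 2$. The bulk checks together with the horizontal and vertical boundary checks defined in the context, viewed as indicator vectors in $\mathbb{F}_2^{2^m}$, are linearly independent over $\mathbb{F}_2$ and are exactly $2^m-m-1$ in number. Consequently the code $uRM(m)$ they define has length $2^m$ and dimension $m+1$.
   Context: Let $a=\lceil m/2\rceil$ and $b=\lfloor m/2\rfloor$. Place $2^m$ bits on a grid with $2^b$ rows and $2^a$ columns, positions $(i,j)$, row $1$ on top, column $1$ leftmost. Bulk checks: for every $1\le i<2^b$, $1\le j<2^a$, the set $\{(i,j),(i+1,j),(i,j+1),(i+1,j+1)\}$. Boundary checks: for a line of $L=2^n$ positions labelled $1,\dots,L$, each $s\in\{1,\dots,n-1\}$, $w=2^s$, and each integer $t$ with $-L/(2w)+1\le t\le L/(2w)-1$, let $S(w,t)=\{L/2-w/2+wt,\ L/2-w/2+wt+1,\ L/2+w/2+wt,\ L/2+w/2+wt+1\}$. Horizontal boundary checks are the $S(w,t)$ with $n=a$ on the top row (position $j\mapsto(1,j)$); vertical boundary checks are the $S(w,t)$ with $n=b$ on the leftmost column (position $i\mapsto(i,1)$). $uRM(m)$ is the set of $x\in\mathbb{F}_2^{2^m}$ whose sum over every check is $0$. *)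

(* Defs.v *)
From HB Require Import structures.
From mathcomp Require Import all_boot all_order all_algebra.
Set Implicit Arguments. Unset Strict Implicit. Unset Printing Implicit Defensive.
Import GRing.Theory.
Local Open Scope ring_scope.

(* a = ceil(m/2), b = floor(m/2) *)
Definition acol (m : nat) : nat := uphalf m.
Definition brow (m : nat) : nat := m./2.
Definition nrows (m : nat) : nat := (2 ^ brow m)%N.
Definition ncols (m : nat) : nat := (2 ^ acol m)%N.

(* Bits are indexed by grid positions (i,j), 1 <= i <= 2^b, 1 <= j <= 2^a,
   flattened (row-major, via mxvec) into a row vector of length 2^b * 2^a. *)
Definition ind (m : nat) (P : nat -> nat -> bool) : 'rV['F_2]_(nrows m * ncols m) :=
  mxvec (\matrix_(i < nrows m, j < ncols m) (P i.+1 j.+1)%:R).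

Definition bulkP (i j : nat) : nat -> nat -> bool :=
  fun x y => ((x == i) || (x == i.+1)) && ((y == j) || (y == j.+1)).

Definition Sset (n s : nat) (t : int) : pred int :=
  let L := (2 ^ n)%N in let w := (2 ^ s)%N in
  let c := (L %/ 2)%:Z - (w %/ 2)%:Z + w%:Z * t in
  let d := (L %/ 2)%:Z + (w %/ 2)%:Z + w%:Z * t in
  fun p => [|| p == c, p == c + 1, p == d | p == d + 1].

Definition trange (n s : nat) : seq int :=
  let K := ((2 ^ n) %/ (2 * 2 ^ s))%N in
  [seq (k%:Z - (K%:Z - 1)) | k <- iota 0 (2 * K - 1)%N].

Definition horP (m s : nat) (t : int) : nat -> nat -> bool :=
  fun x y => (x == 1)%N && (Sset (acol m) s t y%:Z).
Definition verP (m s : nat) (t : int) : nat -> nat -> bool :=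
  fun x y => (y == 1)%N && (Sset (brow m) s t x%:Z).

Definition bulk_checks (m : nat) : seq 'rV['F_2]_(nrows m * ncols m) :=
  [seq ind m (bulkP i j) | i <- iota 1 (nrows m - 1)%N, j <- iota 1 (ncols m - 1)%N].
Definition hor_checks (m : nat) : seq 'rV['F_2]_(nrows m * ncols m) :=
  [seq ind m (horP m s t) | s <- iota 1 (acol m - 1)%N, t <- trange (acol m) s].
Definition ver_checks (m : nat) : seq 'rV['F_2]_(nrows m * ncols m) :=
  [seq ind m (verP m s t) | s <- iota 1 (brow m - 1)%N, t <- trange (brow m) s].

Definition checks (m : nat) : seq 'rV['F_2]_(nrows m * ncols m) :=
  bulk_checks m ++ hor_checks m ++ ver_checks m.

Definition checkmx (m : nat) : 'M['F_2]_(size (checks m), nrows m * ncols m) :=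
  \matrix_(k < size (checks m)) (checks m)`_k.

(* uRM(m) = { x | x *m checkmx^T = 0 }, i.e. the sum of x over every check is 0;
   represented as the (row space of the) kernel matrix. *)
Definition uRM (m : nat) : 'M['F_2]_(nrows m * ncols m) := kermx (checkmx m)^T.

(* Main.v *)
Require Import Defs.
From mathcomp Require Import all_boot all_order all_algebra.
From mathcomp Require Import zify ring.
Set Implicit Arguments. Unset Strict Implicit. Unset Printing Implicit Defensive.
Import GRing.Theory.
Local Open Scope ring_scope.

Definition indRC (R C : nat) (P : nat -> nat -> bool) : 'rV['F_2]_(R * C) :=
  mxvec (\matrix_(i < R, j < C) (P i.+1 j.+1)%:R).

Lemma echelon (X : eqType) (x0 : X) (P : seq X) (f : X -> nat -> nat -> bool)
  (ld : X -> nat * nat) (R C : nat) :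
  (forall x, x \in P -> [/\ (0 < (ld x).1 <= R)%N, (0 < (ld x).2 <= C)%N,
     f x (ld x).1 (ld x).2 &
     forall i j, f x i j -> (i, j) = ld x \/ (i * C + j < (ld x).1 * C + (ld x).2)%N]) ->
  uniq (map ld P) ->
  free (map (fun x => indRC R C (f x)) P).
Proof.
move=> H U; set s := map _ P.
case: (@freeP _ _ _ (in_tuple s)) => //= nf; exfalso; apply: nf => k Hk i0.
set W := fun i : 'I_(size s) =>
  ((ld (nth x0 P i)).1 * C + (ld (nth x0 P i)).2)%N.
apply/eqP/negPn/negP => ki0.
case: (@arg_maxnP _ _ (fun j => k j != 0) W ki0) => i ki imax.
have ilt : (i < size P)%N by rewrite -(size_map (fun x => indRC R C (f x))); exact: ltn_ord.
have xin : nth x0 P i \in P by apply: mem_nth.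
have [/andP[a0 aR] /andP[b0 bC] fab dom] := H _ xin.
set a := (ld (nth x0 P i)).1 in a0 aR fab dom.
set b := (ld (nth x0 P i)).2 in b0 bC fab dom.
have aR' : (a.-1 < R)%N by lia.
have bC' : (b.-1 < C)%N by lia.
move/rowP/(_ (mxvec_index (Ordinal aR') (Ordinal bC'))): Hk.
rewrite !mxE summxE (bigD1 i) //= big1 ?addr0.
  rewrite !mxE (nth_map x0) // mxvecE mxE /=.
  have -> : a.-1.+1 = a by lia.
  have -> : b.-1.+1 = b by lia.
  by rewrite fab mulr1 => /eqP; rewrite (negPf ki).
move=> j ji; rewrite !mxE.
have jlt : (j < size P)%N by rewrite -(size_map (fun x => indRC R C (f x))).
rewrite (nth_map x0) // mxvecE mxE /=.
have -> : a.-1.+1 = a by lia.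
have -> : b.-1.+1 = b by lia.
have [->|kj] := eqVneq (k j) 0; first by rewrite mul0r.
case fj: (f (nth x0 P j) a b); last by rewrite mulr0.
have xjin : nth x0 P j \in P by apply: mem_nth.
have [_ _ _ domj] := H _ xjin.
case: (domj _ _ fj) => [E|lt].
  have : nth (0,0)%N (map ld P) i = nth (0,0)%N (map ld P) j.
    by rewrite !(nth_map x0) // [ld (nth x0 P i)]surjective_pairing E.
  move/eqP; rewrite nth_uniq; [|by rewrite (size_map ld); exact: ilt|by rewrite (size_map ld); exact: jlt|by []] => /eqP E2.
  by move: ji; rewrite (_ : i = j) ?eqxx //; apply/val_inj.
have := imax j kj; rewrite /W -/a -/b; lia.
Qed.
Definition Kn (n s : nat) : nat := ((2 ^ n) %/ (2 * 2 ^ s))%N.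

Lemma Kn_eq s' e : Kn (s' + 2 + e) s'.+1 = (2 ^ e)%N.
Proof.
rewrite /Kn (_ : (2 ^ (s' + 2 + e) = 2 ^ e * (2 * 2 ^ s'.+1))%N) ?mulnK ?muln_gt0 ?expn_gt0 //.
by rewrite !expnD (expnS 2 s') (expnS 2 1) expn1; lia.
Qed.

Lemma Sset_nat (s' e k y : nat) :
  Sset (s' + 2 + e) s'.+1 (k%:Z - ((Kn (s' + 2 + e) s'.+1)%:Z - 1)) y%:Z =
  [|| y == 2 ^ s' * (2 * k + 1), y == 2 ^ s' * (2 * k + 1) + 1,
      y == 2 ^ s' * (2 * k + 3) | y == 2 ^ s' * (2 * k + 3) + 1]%N.
Proof.
rewrite Kn_eq /Sset.
have -> : ((2 ^ (s' + 2 + e)) %/ 2 = 2 ^ s' * 2 ^ e * 2)%N.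
  rewrite (_ : (2 ^ (s' + 2 + e) = 2 * (2 ^ s' * 2 ^ e * 2))%N) ?mulKn //.
  by rewrite !expnD (expnS 2 1) expn1; lia.
have -> : ((2 ^ s'.+1) %/ 2 = 2 ^ s')%N by rewrite expnS mulKn.
rewrite expnS.
move: (2 ^ s')%N (2 ^ e)%N => p q.
have -> : ((p * q * 2)%:Z - p%:Z + (2 * p)%:Z * (k%:Z - (q%:Z - 1)) = (p * (2 * k + 1))%N%:Z)%R by lia.
have -> : ((p * q * 2)%:Z + p%:Z + (2 * p)%:Z * (k%:Z - (q%:Z - 1)) = (p * (2 * k + 3))%N%:Z)%R by lia.
by rewrite -!PoszD !eqz_nat.
Qed.

Lemma pow2_odd_inj a b k l :
  (2 ^ a * (2 * k + 1) = 2 ^ b * (2 * l + 1))%N -> a = b /\ k = l.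
Proof.
elim: a b => [|a IH] [|b] /=.
- rewrite !expn0 !mul1n; lia.
- rewrite expn0 mul1n expnS => /(congr1 odd); rewrite -mulnA oddD oddM /= oddM /=.
  by rewrite ?addbT ?andbF.
- rewrite expn0 mul1n expnS => /(congr1 odd); rewrite -mulnA oddD oddM /= oddM /=.
  by rewrite ?addbT ?andbF.
- rewrite !expnS -!mulnA => /eqP; rewrite eqn_pmul2l // => /eqP /IH [-> ->] //.
Qed.

Definition X := ((nat * nat) + ((nat * nat) + (nat * nat)))%type.

Definition fX m (x : X) : nat -> nat -> bool :=
  match x with
  | inl (i, j) => bulkP i j
  | inr (inl (s, k)) => horP m s (k%:Z - ((Kn (acol m) s)%:Z - 1))
  | inr (inr (s, k)) => verP m s (k%:Z - ((Kn (brow m) s)%:Z - 1))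
  end.

Definition Ph n := [seq (s, k) | s <- iota 1 (n - 1), k <- iota 0 (2 * Kn n s - 1)].
Definition Pb m := [seq (i, j) | i <- iota 1 (nrows m - 1), j <- iota 1 (ncols m - 1)].
Definition PX m : seq X := map inl (Pb m) ++ map (fun p => inr (inl p)) (Ph (acol m))
  ++ map (fun p => inr (inr p)) (Ph (brow m)).

Lemma checks_eq m :
  checks m = map (fun x => indRC (nrows m) (ncols m) (fX m x)) (PX m).
Proof.
rewrite /checks /PX !map_cat -!map_comp; congr (_ ++ _ ++ _).
- by rewrite /bulk_checks /Pb map_allpairs.
- by rewrite /hor_checks /Ph map_allpairs /trange allpairs_mapr.
- by rewrite /ver_checks /Ph map_allpairs /trange allpairs_mapr.
Qed.

Definition dd (s k : nat) : nat := (2 ^ s.-1 * (2 * k + 3) + 1)%N.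

Definition ld (x : X) : nat * nat :=
  match x with
  | inl (i, j) => (i.+1, j.+1)
  | inr (inl (s, k)) => (1%N, dd s k)
  | inr (inr (s, k)) => (dd s k, 1%N)
  end.

Definition memPX m (x : X) : Prop :=
  match x with
  | inl (i, j) => [/\ 1 <= i, i <= nrows m - 1, 1 <= j & j <= ncols m - 1]%N
  | inr (inl (s, k)) => [/\ 1 <= s, s <= acol m - 1 & k < 2 * Kn (acol m) s - 1]%N
  | inr (inr (s, k)) => [/\ 1 <= s, s <= brow m - 1 & k < 2 * Kn (brow m) s - 1]%N
  end.

Lemma Ph_mem n s k : (s, k) \in Ph n -> [/\ 1 <= s, s <= n - 1 & k < 2 * Kn n s - 1]%N.
Proof.
case/allpairsPdep => s' [k'] [] ; rewrite !mem_iota => /andP[h1 h2] /andP[_ h3] [-> ->].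
split; lia.
Qed.

Lemma PX_mem m x : x \in PX m -> memPX m x.
Proof.
rewrite /PX !mem_cat => /or3P[] /mapP [p pin ->]; case: p pin => a b.
- case/allpairsP => -[a' b'] /= [] ; rewrite !mem_iota => /andP[h1 h2] /andP[h3 h4] [-> ->].
  split; lia.
- by move/Ph_mem.
- by move/Ph_mem.
Qed.

Lemma dd_gt1 s k : (1 < dd s k)%N.
Proof. rewrite /dd; have := expn_gt0 2 s.-1; nia. Qed.

Lemma Sset_dom n s k y : (1 <= s <= n - 1)%N ->
  Sset n s (k%:Z - ((Kn n s)%:Z - 1)) y%:Z -> (y <= dd s k)%N.
Proof.
case: s => [|s'] // /andP[_ h].
have [e ->] : exists e, n = (s' + 2 + e)%N by exists (n - s' - 2)%N; lia.
rewrite Sset_nat /dd /= => H.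
have := expn_gt0 2 s'; move: H; move: (2 ^ s')%N => p.
case/or4P => /eqP ->; nia.
Qed.

Lemma Sset_top n s k : (1 <= s <= n - 1)%N ->
  Sset n s (k%:Z - ((Kn n s)%:Z - 1)) (dd s k)%:Z.
Proof.
case: s => [|s'] // /andP[_ h].
have [e ->] : exists e, n = (s' + 2 + e)%N by exists (n - s' - 2)%N; lia.
by rewrite Sset_nat /dd /= eqxx !orbT.
Qed.

Lemma dd_le n s k : (1 <= s <= n - 1)%N -> (k < 2 * Kn n s - 1)%N -> (dd s k <= 2 ^ n)%N.
Proof.
case: s => [|s'] // /andP[_ h].
have [e ->] : exists e, n = (s' + 2 + e)%N by exists (n - s' - 2)%N; lia.
rewrite Kn_eq /dd /= => hk.
rewrite (_ : (2 ^ (s' + 2 + e) = 2 ^ s' * (4 * 2 ^ e))%N); last first.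
  by rewrite !expnD (expnS 2 1) expn1; lia.
have := expn_gt0 2 s'; have := expn_gt0 2 e.
move: hk; move: (2 ^ s')%N (2 ^ e)%N => p q; nia.
Qed.

Lemma dd_inj s k s' k' : (1 <= s)%N -> (1 <= s')%N -> dd s k = dd s' k' -> s = s' /\ k = k'.
Proof.
rewrite /dd => h h' /eqP; rewrite eqn_add2r => /eqP.
rewrite (_ : (2 * k + 3 = 2 * k.+1 + 1)%N); last lia.
rewrite (_ : (2 * k' + 3 = 2 * k'.+1 + 1)%N); last lia.
move/pow2_odd_inj => [E1 E2]; split; lia.
Qed.

Lemma ld_inj m : {in PX m &, injective ld}.
Proof.
move=> x y /PX_mem hx /PX_mem hy E.
case: x hx E => [[i j]|[[s k]|[s k]]] hx; case: y hy => [[i' j']|[[s' k']|[s' k']]] hy /= E;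
  case: hx => *; case: hy => *; move: (congr1 fst E) (congr1 snd E) => /= E1 E2.
- by case: E1 => ->; case: E2 => ->.
- lia.
- lia.
- lia.
- by case: (dd_inj _ _ E2) => // -> ->.
- have := dd_gt1 s' k'; lia.
- lia.
- have := dd_gt1 s k; lia.
- by case: (dd_inj _ _ E1) => // -> ->.
Qed.

Lemma PX_uniq m : uniq (PX m).
Proof.
have Ph_uniq n : uniq (Ph n).
  apply: allpairs_uniq_dep; [exact: iota_uniq | by move=> x _; exact: iota_uniq|].
  by move=> [a b] [c d] _ _ /= [-> ->].
have Pb_uniq : uniq (Pb m).
  apply: allpairs_uniq; rewrite ?iota_uniq //.
  by move=> [a b] [c d] _ _ /= [-> ->].
rewrite /PX !cat_uniq !map_inj_uniq; try by move=> ? ? [].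
rewrite Pb_uniq !Ph_uniq /= andbT; apply/andP; split.
  apply/hasPn => z /[!mem_cat] /orP[] /mapP[p _ ->]; apply/mapP => -[q _] //.
apply/hasPn => z /mapP[p _ ->]; apply/mapP => -[q _] //.
Qed.

Lemma hsize n : (1 <= n)%N ->
  (sumn [seq size (trange n s) | s <- iota 1 (n - 1)] + n + 1 = 2 ^ n)%N.
Proof.
elim: n => [//|n IH] _.
case: n IH => [|n] IH; first by [].
rewrite (_ : (n.+2 - 1 = (n.+1 - 1).+1)%N); last lia.
rewrite /= (_ : iota 2 (n.+1 - 1) = map S (iota 1 (n.+1 - 1))); last first.
  by rewrite -[2%N]/(1 + 1)%N iotaDl.
rewrite -map_comp.
have E : forall s, (size (trange n.+2 s.+1) = size (trange n.+1 s))%N.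
  move=> s; rewrite /trange !size_map !size_iota.
  by rewrite (expnS 2 n.+1) (expnS 2 s) divnMl.
rewrite (eq_map (g := fun s => size (trange n.+1 s)) E).
have := IH isT.
rewrite /trange size_map size_iota.
rewrite (_ : (2 ^ n.+2 %/ (2 * 2 ^ 1) = 2 ^ n)%N); last first.
  by rewrite !expnS mulnA mulKn.
have := expn_gt0 2 n; rewrite !expnS; lia.
Qed.

Theorem lemma1 (m : nat) (hm : (2 <= m)%N) :
  free (checks m) /\ size (checks m) = (2 ^ m - m - 1)%N /\
  (nrows m * ncols m = 2 ^ m)%N /\ \rank (uRM m) = m.+1.
Proof.
have Hm := odd_double_half m; rewrite -muln2 in Hm.
have Hu := uphalf_half m.
have ab : (acol m + brow m = m)%N by rewrite /acol /brow; lia.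
have a1 : (1 <= acol m)%N by rewrite /acol; lia.
have b1 : (1 <= brow m)%N by rewrite /brow; lia.
have RC : (nrows m * ncols m = 2 ^ m)%N.
  by rewrite /nrows /ncols -expnD addnC ab.
have R0 : (0 < nrows m)%N by rewrite expn_gt0.
have C0 : (0 < ncols m)%N by rewrite expn_gt0.
have Fr : free (checks m).
  rewrite checks_eq; apply: (echelon (inl (0, 0)%N)); last first.
    by rewrite map_inj_in_uniq; [exact: PX_uniq | exact: ld_inj].
  move=> x /PX_mem; case: x => [[i j]|[[s k]|[s k]]] /=.
  - case=> h1 h2 h3 h4; split; [lia | lia | by rewrite /bulkP !eqxx !orbT |].
    move=> x y /andP[/orP[]/eqP-> /orP[]/eqP->]; [right; nia|right; nia|right; nia|by left].
  - case=> h1 h2 h3; split; [lia | | by rewrite /horP eqxx /= Sset_top ?h1 ?h2 |].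
      apply/andP; split; first exact: ltnW (dd_gt1 s k).
      by apply: dd_le => //; rewrite h1 h2.
    move=> x y /andP[/eqP-> Hs].
    have hs : (1 <= s <= acol m - 1)%N by rewrite h1 h2.
    have hy := Sset_dom hs Hs.
    have [->|ne] := eqVneq y (dd s k); [by left | right; lia].
  - case=> h1 h2 h3; split; [ | lia | by rewrite /verP eqxx /= Sset_top ?h1 ?h2 |].
      apply/andP; split; first exact: ltnW (dd_gt1 s k).
      by apply: dd_le => //; rewrite h1 h2.
    move=> x y /andP[/eqP-> Hs].
    have hs : (1 <= s <= brow m - 1)%N by rewrite h1 h2.
    have hy := Sset_dom hs Hs.
    have [->|ne] := eqVneq x (dd s k); [by left | right].
    have lt : (x < dd s k)%N by lia.
    nia.
have Sz : size (checks m) = (2 ^ m - m - 1)%N.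
  rewrite /checks !size_cat /bulk_checks size_allpairs !size_iota /hor_checks /ver_checks.
  rewrite !size_allpairs_dep.
  have Ha := hsize a1; have Hb := hsize b1.
  rewrite -RC; move: Ha Hb R0 C0 ab; rewrite /nrows /ncols.
  set Sa := sumn [seq size (trange (acol m) s) | s <- iota 1 (acol m - 1)].
  set Sb := sumn [seq size (trange (brow m) s) | s <- iota 1 (brow m - 1)].
  clearbody Sa Sb.
  move: (2 ^ brow m)%N (2 ^ acol m)%N => R C.
  nia.
split=> //; split=> //; split=> //.
have rf : row_free (checkmx m).
  apply: inj_row_free => v Hv; apply/rowP => i; rewrite mxE.
  move: Hv; rewrite mulmx_sum_row => Hv.
  have := (@freeP _ _ _ (in_tuple (checks m))).
  move=> /(_ Fr) /(_ (fun i => v 0 i)); apply.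
  by rewrite -[RHS]Hv; apply: eq_bigr => j _; rewrite rowK.
rewrite /uRM mxrank_ker mxrank_tr (eqP rf) Sz RC.
have := ltn_expl m (isT : (1 < 2)%N); lia.
Qed.
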